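(* Let $R$ be a commutative ring with nonzero identity, $\delta$ an expansion of ideals of $R$, and $I$ a $\delta$-$n$-ideal of $R$ such that $(\delta(I):x)\subseteq\delta((I:x))\neq R$ for all $x\in R\setminus\delta(I)$. Then $(I:x)$ is a $\delta$-$n$-ideal of $R$ for every $x\in R\setminus\delta(I)$. In particular, if $I$ is a quasi $n$-ideal of $R$, then $(I:x)$ is a quasi $n$-ideal of $R$ for all $x\in R\setminus\sqrt{I}$.
   Context: An expansion of ideals of a ring $R$ is a map $\delta$ from the set of ideals of $R$ to itself such that $I\subseteq\delta(I)$ for every ideal $I$, and $\delta(I)\subseteq\delta(J)$ whenever $I\subseteq J$. $\sqrt{0}$ denotes the nilradical of $R$ and $(I:x)=\{r\in R: rx\in I\}$. Given an expansion $\delta$, a proper ideal $I$ of $R$ is a $\delta$-$n$-ideal if whenever $a,b\in R$ with $ab\in I$ and $a\notin\sqrt{0}$, then $b\in\delta(I)$. A quasi $n$-ideal is a $\delta_1$-$n$-ideal, where $\delta_1(J)=\sqrt{J}$. *)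

(* Defs.v *)
(* Ideals of a commutative ring R are represented as
   predicates R -> Prop (subsets of R). *)
From mathcomp Require Import all_boot all_order all_algebra.
Set Implicit Arguments. Unset Strict Implicit. Unset Printing Implicit Defensive.
Import GRing.Theory.
Local Open Scope ring_scope.

Section Defs.
Variable R : comNzRingType.

Definition ideal (I : R -> Prop) : Prop :=
  I 0 /\ (forall a b, I a -> I b -> I (a - b)) /\ (forall r a, I a -> I (r * a)).

Definition sub_ideal (I J : R -> Prop) : Prop := forall r, I r -> J r.

Definition is_whole (I : R -> Prop) : Prop := forall r, I r.

Definition proper_ideal (I : R -> Prop) : Prop := ideal I /\ ~ is_whole I.

Definition expansion (delta : (R -> Prop) -> (R -> Prop)) : Prop :=
  (forall I, ideal I -> ideal (delta I)) /\
  (forall I, ideal I -> sub_ideal I (delta I)) /\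
  (forall I J, ideal I -> ideal J -> sub_ideal I J -> sub_ideal (delta I) (delta J)).

Definition nilrad (a : R) : Prop := exists n : nat, a ^+ n = 0.

Definition radical (J : R -> Prop) : R -> Prop := fun a => exists n : nat, J (a ^+ n).

Definition colon (I : R -> Prop) (x : R) : R -> Prop := fun r => I (r * x).

Definition delta_n_ideal (delta : (R -> Prop) -> (R -> Prop)) (I : R -> Prop) : Prop :=
  proper_ideal I /\
  (forall a b, I (a * b) -> ~ nilrad a -> delta I b).

Definition quasi_n_ideal (I : R -> Prop) : Prop := delta_n_ideal radical I.

End Defs.

(* Main.v *)
Require Import Defs.
From mathcomp Require Import all_boot all_order all_algebra.
From Stdlib Require Import Classical.
Local Open Scope ring_scope.
Import GRing.Theory.

Lemma colon_ideal (R : comNzRingType) (I : R -> Prop) x : ideal I -> ideal (colon I x).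
Proof.
move=> [I0 [IB IM]]; split; [|split].
- by rewrite /colon mul0r.
- by move=> a b Ha Hb; rewrite /colon mulrBl; apply: IB.
- by move=> r a Ha; rewrite /colon -mulrA; apply: IM.
Qed.

Theorem lemma2p11 :
  (forall (R : comNzRingType) (delta : (R -> Prop) -> (R -> Prop)) (I : R -> Prop),
     expansion delta ->
     delta_n_ideal delta I ->
     (forall x : R, ~ delta I x ->
        sub_ideal (colon (delta I) x) (delta (colon I x)) /\
        ~ is_whole (delta (colon I x))) ->
     forall x : R, ~ delta I x -> delta_n_ideal delta (colon I x))
  /\
  (forall (R : comNzRingType) (I : R -> Prop),
     quasi_n_ideal I ->
     forall x : R, ~ radical I x -> quasi_n_ideal (colon I x)).
Proof.
split.
- move=> R delta I [_ [ext _]] [[idI _] HI] H x Hx.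
  have [Hs Hw] := H x Hx.
  have idc := @colon_ideal _ I x idI.
  split; first split => //.
  + by move=> Hwh; apply: Hw => r; apply: ext => //; apply: Hwh.
  + move=> a b Hab Hna; apply: Hs; rewrite /colon.
    apply: (HI a) => //; by rewrite /colon -mulrA in Hab.
- move=> R I [[idI _] HI] x Hx.
  have idc := @colon_ideal _ I x idI.
  split; first split => //.
  + by move=> Hwh; apply: Hx; exists 1%N; rewrite expr1 -[x]mul1r; apply: Hwh.
  + move=> a b Hab Hna.
    rewrite /colon -mulrA in Hab.
    have [n Hn] := HI a (b * x) Hab Hna.
    rewrite exprMn in Hn.
    case: (classic (nilrad b)) => [[m Hm]|Hnb].
    * exists m; rewrite /colon Hm mul0r; by case: idI.
    * have Hnbn : ~ nilrad (b ^+ n).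
        by move=> [k Hk]; apply: Hnb; exists (n * k)%N; rewrite exprM.
      have [k Hk] := HI _ _ Hn Hnbn.
      exfalso; apply: Hx; exists (n * k)%N; by rewrite exprM.
Qed.
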